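(* Let $G,H$ be groups, $K\le H$, $\phi\in\mathrm{Hom}(H,G)$, and let $\mathcal{T}:A^G\to A^H$ be a $\phi$-cellular automaton with memory set contained in $\phi(K)$. Then: (1) $\mathcal{T}$ is injective if and only if $\mathcal{T}_K$ is injective and $\phi$ is surjective; (2) $\mathcal{T}$ is bijective if and only if $\mathcal{T}_K$ is bijective and $\phi$ is bijective.
   Context: $A$ is a finite set with $|A|\ge 2$. For a group $G$, $A^G$ is the set of functions $G\to A$ with shift action $(g\cdot x)(k):=x(g^{-1}k)$. For $\phi\in\mathrm{Hom}(H,G)$, a $\phi$-cellular automaton is a map $\mathcal{T}:A^G\to A^H$ for which there exist finite $T\subseteq G$ (memory set) and $\mu:A^T\to A$ (local function) with $\mathcal{T}(x)(h)=\mu((\phi(h^{-1})\cdot x)|_T)$ for all $x,h$. If the memory set $T$ is contained in $\phi(K)$, the restriction $\mathcal{T}_K:A^{\phi(K)}\to A^K$ is defined by $\mathcal{T}_K(x)(k):=\mu((\phi(k^{-1})\cdot x)|_T)$ for $x\in A^{\phi(K)}$, $k\in K$; equivalently it is the unique $\phi|_K^{\phi(K)}$-cellular automaton with $\mathcal{T}(x)|_K=\mathcal{T}_K(x|_{\phi(K)})$ for all $x\in A^G$. *)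

(* Defs.v *)
From mathcomp Require Import all_boot.
From Stdlib Require Import List.
Set Implicit Arguments. Unset Strict Implicit. Unset Printing Implicit Defensive.

Record group := Group {
  gcar :> Type;
  gmul : gcar -> gcar -> gcar;
  gone : gcar;
  ginv : gcar -> gcar;
  gmulA : forall x y z, gmul x (gmul y z) = gmul (gmul x y) z;
  gmul1l : forall x, gmul gone x = x;
  gmulVl : forall x, gmul (ginv x) x = gone
}.
Arguments gmul {g}. Arguments gone {g}. Arguments ginv {g}.

Record hom (H G : group) := Hom {
  hfun :> H -> G;
  hfunM : forall x y, hfun (gmul x y) = gmul (hfun x) (hfun y)
}.

Record subgroup (H : group) := Subgroup {
  smem :> H -> Prop;
  smem1 : smem gone;
  smemM : forall x y, smem x -> smem y -> smem (gmul x y);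
  smemV : forall x, smem x -> smem (ginv x)
}.

Definition shift (G : group) (A : Type) (g : G) (x : G -> A) : G -> A :=
  fun k => x (gmul (ginv g) k).

(* Memory sets are finite subsets T of G, given by a list; A^T is the type of
   functions on the elements of T. *)
Definition memT (G : group) (T : list G) := {t : G | In t T}.

Definition ca (H G : group) (A : Type) (phi : hom H G) (T : list G)
  (mu : (memT T -> A) -> A) : (G -> A) -> (H -> A) :=
  fun x h => mu (fun t => shift (phi (ginv h)) x (proj1_sig t)).

Definition img (H G : group) (phi : hom H G) (K : subgroup H) (g : G) : Prop :=
  exists k, K k /\ phi k = g.
Definition imgT (H G : group) (phi : hom H G) (K : subgroup H) :=
  {g : G | img phi K g}.
Definition subT (H : group) (K : subgroup H) := {k : H | K k}.

Lemma hom_ginv (H G : group) (phi : hom H G) (x : H) :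
  phi (ginv x) = ginv (phi x).
Proof.
have cancel_l : forall (Q : group) (a b c : Q), gmul a b = gmul a c -> b = c.
  move=> Q a b c e.
  by rewrite -(gmul1l b) -(gmul1l c) -(gmulVl a) -!gmulA e.
have mul1r : forall (Q : group) (a : Q), gmul a gone = a.
  move=> Q a; apply: (cancel_l _ (ginv a)).
  by rewrite gmulA gmulVl gmul1l.
have mulVr : forall (Q : group) (a : Q), gmul a (ginv a) = gone.
  move=> Q a; apply: (cancel_l _ (ginv a)).
  by rewrite gmulA gmulVl gmul1l mul1r.
have phi1 : phi gone = gone.
  apply: (cancel_l _ (phi gone)); by rewrite -hfunM gmul1l mul1r.
apply: (cancel_l _ (phi x)); by rewrite -hfunM mulVr mulVr phi1.
Qed.

Lemma img_shift (H G : group) (phi : hom H G) (K : subgroup H) (k : subT K)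
  (t : G) : img phi K t -> img phi K (gmul (ginv (phi (ginv (proj1_sig k)))) t).
Proof.
case: k => k Kk [k' [Kk' <-]] /=.
exists (gmul (ginv (ginv k)) k'); split.
  by apply: smemM => //; do 2 apply: smemV.
by rewrite hfunM !hom_ginv.
Qed.

Definition caK (H G : group) (A : Type) (phi : hom H G) (K : subgroup H)
  (T : list G) (mu : (memT T -> A) -> A)
  (hT : forall t, In t T -> img phi K t) : (imgT phi K -> A) -> (subT K -> A) :=
  fun x k => mu (fun t =>
    x (exist _ (gmul (ginv (phi (ginv (proj1_sig k)))) (proj1_sig t))
             (img_shift k (hT _ (proj2_sig t))))).

(* Main.v *)
Require Import Defs.
From mathcomp Require Import all_boot.
From Stdlib Require Import List.
From Stdlib Require Import Classical ClassicalEpsilon FunctionalExtensionality PropExtensionality ProofIrrelevance.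

Section Grp.
Variable Q : group.
Lemma gcancel (a b c : Q) : gmul a b = gmul a c -> b = c.
Proof. move=> e. by rewrite -(gmul1l b) -(gmul1l c) -(gmulVl a) -!gmulA e. Qed.
Lemma gmul1r (a : Q) : gmul a gone = a.
Proof. apply: (gcancel (ginv a)). by rewrite gmulA gmulVl gmul1l. Qed.
Lemma gmulVr (a : Q) : gmul a (ginv a) = gone.
Proof. apply: (gcancel (ginv a)). by rewrite gmulA gmulVl gmul1l gmul1r. Qed.
Lemma ginvK (a : Q) : ginv (ginv a) = a.
Proof. apply: (gcancel (ginv a)). by rewrite gmulVl gmulVr. Qed.
End Grp.

Lemma hom1 (H G : group) (phi : hom H G) : phi gone = gone.
Proof. apply: (@gcancel _ (phi gone)); by rewrite -hfunM gmul1l gmul1r. Qed.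

Lemma phiVV (H G : group) (phi : hom H G) h : ginv (phi (ginv h)) = phi h.
Proof. by rewrite hom_ginv ginvK. Qed.

Section Main.
Variables (A : finType) (G H : group) (K : subgroup H) (phi : hom H G)
  (T : list G) (mu : (memT T -> A) -> A) (hT : forall t, In t T -> img phi K t).

Definition ext (y : imgT phi K -> A) (a0 : A) (g : G) : A :=
  match excluded_middle_informative (img phi K g) with
  | left p => y (exist _ g p) | right _ => a0 end.

Lemma extE y a0 g p : ext y a0 g = y (exist _ g p).
Proof.
rewrite /ext; case: excluded_middle_informative => [p'|np].
  by rewrite (proof_irrelevance _ p p').
by exfalso.
Qed.

Lemma caE x h : ca phi mu x h = mu (fun t => x (gmul (phi h) (proj1_sig t))).
Proof. by rewrite /ca /shift phiVV. Qed.

Lemma caKE y a0 k : caK mu hT y k =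
  mu (fun t => ext y a0 (gmul (phi (proj1_sig k)) (proj1_sig t))).
Proof.
rewrite /caK; congr mu; apply: functional_extensionality => t.
move: (img_shift k (hT _ (proj2_sig t))); rewrite phiVV => p.
by rewrite (extE _ _ _ p).
Qed.

Lemma ca_local x1 x2 h :
  (forall t, In t T -> x1 (gmul (phi h) t) = x2 (gmul (phi h) t)) ->
  ca phi mu x1 h = ca phi mu x2 h.
Proof.
move=> e; rewrite !caE; congr mu; apply: functional_extensionality => t.
exact: e (proj2_sig t).
Qed.

Definition res (x : G -> A) : imgT phi K -> A := fun g => x (proj1_sig g).

Lemma caK_res x k : caK mu hT (res x) k = ca phi mu x (proj1_sig k).
Proof. by []. Qed.


Lemma two_elems (hA : 1 < #|A|) : exists a0 a1 : A, a0 != a1.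
Proof. by case/card_gt1P: hA => x [y [_ _ n]]; exists x, y. Qed.

Lemma img1 : img phi K gone.
Proof. exists gone; split; [exact: smem1 | exact: hom1]. Qed.

Lemma img_mulVr a b : img phi K (gmul a b) -> img phi K b -> img phi K a.
Proof.
case=> k1 [K1 e1] [k2 [K2 e2]]; exists (gmul k1 (ginv k2)); split.
  by apply: smemM => //; apply: smemV.
by rewrite hfunM hom_ginv e1 e2 -gmulA gmulVr gmul1r.
Qed.

Lemma inj_surj (hA : 1 < #|A|) : injective (ca phi mu) -> forall g, exists h, phi h = g.
Proof.
move=> inj g; apply: NNPP => nE.
have [a0 [a1 n01]] := two_elems hA.
pose x2 := fun u => if excluded_middle_informative (u = g) then a1 else a0.
have e : ca phi mu (fun _ => a0) = ca phi mu x2.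
  apply: functional_extensionality => h; apply: ca_local => t Ht.
  rewrite /x2; case: excluded_middle_informative => // eg.
  case: (hT _ Ht) => k [_ ek]; exfalso; apply: nE; exists (gmul h k).
  by rewrite hfunM ek.
have e' : a0 = x2 g := f_equal (fun x => x g) (inj _ _ e).
move: e'; rewrite /x2; case: (excluded_middle_informative (g = g)) => [gg E|ng].
  by rewrite E eqxx in n01.
by exfalso; apply: ng.
Qed.

Lemma inj_injK (a0 : A) : injective (ca phi mu) -> injective (caK mu hT).
Proof.
move=> inj y1 y2 e.
have e2 : ca phi mu (ext y1 a0) = ca phi mu (ext y2 a0).
  apply: functional_extensionality => h.
  case: (classic (img phi K (phi h))) => [[k [Kk ek]] | ni].
    have -> : forall x, ca phi mu x h = ca phi mu x k by move=> x; rewrite !caE -ek.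
    have := f_equal (fun f => f (exist _ k Kk)) e.
    by rewrite /= (caKE y1 a0) (caKE y2 a0) /= !caE -ek.
  apply: ca_local => t Ht.
  have nt : ~ img phi K (gmul (phi h) t).
    by move=> it; apply: ni; exact: img_mulVr it (hT _ Ht).
  by rewrite /ext; case: excluded_middle_informative.
apply: functional_extensionality => [[g p]].
by rewrite -(extE y1 a0 g p) -(extE y2 a0 g p) (inj _ _ e2).
Qed.

Lemma injK_inj : injective (caK mu hT) -> (forall g, exists h, phi h = g) ->
  injective (ca phi mu).
Proof.
move=> inj surj x1 x2 e; apply: functional_extensionality => g.
have [h <-] := surj g.
pose y x : imgT phi K -> A := fun u => x (gmul (phi h) (proj1_sig u)).
have ey : forall x k, caK mu hT (y x) k = ca phi mu x (gmul h (proj1_sig k)).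
  move=> x k; rewrite /caK /ca /shift /y /= !phiVV hfunM.
  congr mu; apply: functional_extensionality => t /=.
  by rewrite gmulA.
have : y x1 = y x2.
  by apply: inj; apply: functional_extensionality => k; rewrite !ey e.
by move/(f_equal (fun f => f (exist _ gone img1))); rewrite /y /= gmul1r.
Qed.

Lemma bij_phi_inj (hA : 1 < #|A|) : bijective (ca phi mu) -> injective phi.
Proof.
case=> Ti c1 c2 h1 h2 e; apply: NNPP => n12.
have [a0 [a1 n01]] := two_elems hA.
pose w := fun h => if excluded_middle_informative (h = h1) then a0 else a1.
have ew := c2 w.
have : w h1 = w h2 by rewrite -ew !caE e.
rewrite /w; case: (excluded_middle_informative (h1 = h1)) => [hh|nh]; last by exfalso; apply: nh.
case: (excluded_middle_informative (h2 = h1)) => [e'|nh2].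
  by exfalso; apply: n12; rewrite e'.
by rewrite /= => e''; rewrite e'' eqxx in n01.
Qed.

Lemma bij_phi : injective phi -> (forall g, exists h, phi h = g) -> bijective phi.
Proof.
move=> inj surj.
exists (fun g => proj1_sig (constructive_indefinite_description _ (surj g))).
  move=> h; apply: inj; exact: (proj2_sig (constructive_indefinite_description _ (surj (phi h)))).
move=> g; exact: (proj2_sig (constructive_indefinite_description _ (surj g))).
Qed.

Lemma bij_bijK (b0 : A) : bijective (ca phi mu) -> bijective (caK mu hT).
Proof.
case=> Ti c1 c2.
have injK := inj_injK b0 (can_inj c1).
pose wz (z : subT K -> A) : H -> A := fun h =>
  match excluded_middle_informative (K h) with
  | left p => z (exist _ h p) | right _ => b0 end.
have cK : cancel (fun z => res (Ti (wz z))) (caK mu hT).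
  move=> z; apply: functional_extensionality => [[k p]].
  rewrite caK_res /= c2 /wz; case: excluded_middle_informative => [p'|np].
    by rewrite (proof_irrelevance _ p p').
  by exfalso.
exists (fun z => res (Ti (wz z))) => //.
exact: inj_can_sym cK injK.
Qed.

Lemma bijK_surj (a0 : A) : bijective (caK mu hT) -> bijective phi ->
  bijective (ca phi mu).
Proof.
case=> Ki k1 k2 [psi p1 p2].
have surj : forall g, exists h, phi h = g by move=> g; exists (psi g).
have injT := injK_inj (can_inj k1) surj.
pose P h := fun r : H => K (gmul (ginv r) h).
pose rep h := epsilon (inhabits (gone : H)) (P h).
have repP : forall h, K (gmul (ginv (rep h)) h).
  move=> h; apply: (epsilon_spec _ (P h)); exists h; rewrite /P gmulVl.
  exact: smem1.
have repE : forall h k, K k -> rep (gmul h k) = rep h.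
  move=> h k Kk; rewrite /rep; congr epsilon.
  apply: functional_extensionality => r; apply: propositional_extensionality.
  rewrite /P; split.
    move=> Hk; have := smemM Hk (smemV Kk).
    by rewrite -!gmulA gmulVr gmul1r.
  move=> Hh; have := smemM Hh Kk.
  by rewrite -gmulA.
pose Ti (w : H -> A) (g : G) :=
  ext (Ki (fun k : subT K => w (gmul (rep (psi g)) (proj1_sig k)))) a0
      (phi (gmul (ginv (rep (psi g))) (psi g))).
have cT : cancel Ti (ca phi mu).
  move=> w; apply: functional_extensionality => h0.
  have Kk0 := repP h0.
  set r := rep h0.
  have -> : w h0 = caK mu hT (Ki (fun k => w (gmul r (proj1_sig k))))
                       (exist _ _ Kk0).
    by rewrite k2 /= gmulA gmulVr gmul1l.
  rewrite caE (caKE _ a0) /=; congr mu; apply: functional_extensionality => t.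
  case: (hT _ (proj2_sig t)) => kt [Kkt ekt].
  rewrite /Ti -ekt -[gmul (phi h0) (phi kt)]hfunM p1 repE // -/r.
  by rewrite -hfunM gmulA.
exists Ti => //.
exact: inj_can_sym cT injT.
Qed.

Lemma main_all (hA : 1 < #|A|) :
  (injective (ca phi mu) <->
     injective (caK mu hT) /\ (forall g : G, exists h : H, phi h = g))
  /\
  (bijective (ca phi mu) <->
     bijective (caK mu hT) /\ bijective phi).
Proof.
have [a0 _] := two_elems hA.
split; split.
- move=> inj; split; [exact: inj_injK a0 inj | exact: inj_surj hA inj].
- by case=> i s; exact: injK_inj.
- move=> bij; split; first exact: bij_bijK a0 bij.
  apply: bij_phi; first exact: bij_phi_inj hA bij.
  exact: inj_surj hA (bij_inj bij).
- by case=> b1 b2; exact: bijK_surj a0 b1 b2.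
Qed.

End Main.

Theorem theorem5p7 (A : finType) (hA : 1 < #|A|) (G H : group)
  (K : subgroup H) (phi : hom H G) (T : list G) (mu : (memT T -> A) -> A)
  (hT : forall t, In t T -> img phi K t) :
  (injective (ca phi mu) <->
     injective (caK mu hT) /\ (forall g : G, exists h : H, phi h = g))
  /\
  (bijective (ca phi mu) <->
     bijective (caK mu hT) /\ bijective phi).
Proof. exact: main_all. Qed.
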